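(* Let $\mathcal{A}\subseteq C^0([0,1])$ be a subalgebra which is closed with respect to uniform convergence and contains a non-constant function, and let $x_0\in(0,1)$. Then $\mathcal{A}$ contains a non-constant function $f$ which is differentiable at $x_0$.
   Context: $C^0([0,1])$ denotes the algebra of continuous real-valued functions on $[0,1]$ with the supremum norm; the subalgebra is not assumed to contain the constants. *)

(* Defs.v *)
From HB Require Import structures.
From mathcomp Require Import all_boot all_order all_algebra.
From mathcomp Require Import all_classical all_reals all_analysis.
Set Implicit Arguments. Unset Strict Implicit. Unset Printing Implicit Defensive.
Import Order.TTheory GRing.Theory Num.Theory.
Import numFieldNormedType.Exports.
Local Open Scope classical_set_scope.
Local Open Scope ring_scope.

Section Defs.
Variable R : realType.

Definition I01 : set R := [set x | 0 <= x <= 1].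

(* f represents an element of C^0([0,1]) (only values on [0,1] matter) *)
Definition C01 (f : R -> R) : Prop := {within I01, continuous f}.

(* A (a set of representatives of elements of C^0([0,1])) is a real
   subalgebra; constants are not required. *)
Definition is_subalgebra (A : set (R -> R)) : Prop :=
  [/\ (forall f, A f -> C01 f),
      A (fun _ => 0),
      (forall f g, A f -> A g -> A (fun x => f x + g x)),
      (forall (c : R) f, A f -> A (fun x => c * f x)) &
      (forall f g, A f -> A g -> A (fun x => f x * g x))].

Definition unif_cvg01 (u : nat -> R -> R) (g : R -> R) : Prop :=
  forall e : R, 0 < e -> exists N : nat, forall n : nat, (N <= n)%N ->
    forall x, I01 x -> `|u n x - g x| < e.

Definition unif_closed (A : set (R -> R)) : Prop :=
  forall (u : nat -> R -> R) (g : R -> R),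
    (forall n, A (u n)) -> C01 g -> unif_cvg01 u g -> A g.

Definition nonconst01 (f : R -> R) : Prop :=
  exists x y, [/\ I01 x, I01 y & f x <> f y].

End Defs.

(* Main.v *)
Require Import Defs.
From HB Require Import structures.
From mathcomp Require Import all_boot all_order all_algebra.
From mathcomp Require Import all_classical all_reals all_analysis.
From mathcomp Require Import ring lra.
Import Order.TTheory GRing.Theory Num.Theory.
Import numFieldNormedType.Exports.
Local Open Scope classical_set_scope.
Local Open Scope ring_scope.

Set Implicit Arguments. Unset Strict Implicit.
Section P.
Variable R : realType.

Fixpoint P (n : nat) (t : R) : R :=
  if n is m.+1 then P m t + (t ^+ 2 - (P m t) ^+ 2) / 2 else 0.

Lemma bern (u : R) (n : nat) : 0 <= u <= 1 -> (1 - u) ^+ n * (1 + n%:R * u) <= 1.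
Proof.
move=> /andP[u0 u1]; elim: n => [|n IH]; first by rewrite expr0 mul0r addr0 mulr1.
have h0 : 0 <= (1 - u) ^+ n by apply: exprn_ge0; lra.
rewrite exprS -mulrA -natr1.
have : (1 - u) * (1 + (n%:R + 1) * u) <= 1 + n%:R * u.
  have : 0 <= n%:R :> R by [].
  nra.
move=> H; apply: le_trans IH; rewrite mulrCA; by apply: ler_wpM2l.
Qed.

Lemma P_props (t s : R) (n : nat) : 0 <= s <= 1 -> t ^+ 2 = s ^+ 2 ->
  [/\ 0 <= P n t, P n t <= s & s - P n t <= s * (1 - s/2) ^+ n].
Proof.
move=> /andP[s0 t1] ts.
elim: n => [|n [p0 ps pe]] /=; first by rewrite expr0 mulr1 subr0 lexx.
rewrite ts.
have h0 : 0 <= (1 - s/2) ^+ n by apply: exprn_ge0; lra.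
split.
- nra.
- nra.
- rewrite [_ ^+ n.+1]exprSr mulrA.
  have -> : s - (P n t + (s ^+ 2 - P n t ^+ 2) / 2) = (s - P n t) * (1 - (s + P n t)/2) by ring.
  have H : (s - P n t) * (1 - (s + P n t)/2) <= (s - P n t) * (1 - s/2) by nra.
  apply: le_trans H _; apply: ler_wpM2r; lra.
Qed.

Lemma P_err (t : R) (n : nat) : `|t| <= 1 ->
  0 <= `|t| - P n t /\ (`|t| - P n t) * n%:R <= 2.
Proof.
move=> t1.
have ts : t ^+ 2 = `|t| ^+ 2 by exact: (esym (real_normK (num_real t))).
have s0 : 0 <= `|t| by exact: normr_ge0.
move: (`|t| : R) t1 s0 ts => s t1 s0 ts.
have [p0 ps pe] := @P_props t s n (ltac:(apply/andP; split => //)) ts.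
split; first lra.
move: (P n t) p0 ps pe => p p0 ps pe.
have b := @bern (s/2) n.
have : 0 <= s/2 <= 1 by apply/andP; split; lra.
move=> /b {}b.
have n0 : 0 <= n%:R :> R by [].
have H : (s - p) * (1 + n%:R * (s/2)) <= s.
  have : (s - p) * (1 + n%:R * (s/2)) <= s * (1 - s/2) ^+ n * (1 + n%:R * (s/2)).
    apply: ler_wpM2r => //; nra.
  move=> /le_trans; apply; rewrite -mulrA; nra.
have [s00|sp] := eqVneq s 0.
  have -> : s - p = 0 by lra.
  by rewrite mul0r.
have sp' : 0 < s by rewrite lt_def sp s0.
have h : (s - p) * n%:R * s <= 2 * s by nra.
by rewrite -(ler_pM2r sp').
Qed.
End P.


Section Main.
Variable R : realType.
Implicit Types (A : set (R -> R)).

Lemma C01_abs (g : R -> R) : C01 g -> C01 (fun x => `|g x|).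
Proof.
move=> cg x; apply: (continuous_comp (cg x)); exact: norm_continuous.
Qed.

Lemma C01_itv (g : R -> R) : C01 g -> {within `[0, 1], continuous g}.
Proof. by move=> cg; rewrite set_itvcc. Qed.

Lemma abs_closed A g : is_subalgebra A -> unif_closed A -> A g ->
  A (fun x => `|g x|).
Proof.
move=> [Acont A0 Aadd Ascal Amul] Acl Ag.
have cg := Acont _ Ag.
have [m m01 Hm] := EVT_max (@ler01 R) (C01_itv (C01_abs cg)).
set M := `|g m| + 1.
have M0 : 0 < M by rewrite /M; apply: ltr_wpDl.
pose g1 := fun x => M^-1 * g x.
have Ag1 : A g1 := Ascal _ _ Ag.
have g11 : forall x, I01 x -> `|g1 x| <= 1.
  move=> x Ix; rewrite /g1 normrM gtr0_norm ?invr_gt0 // ler_pdivrMl // mulr1.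
  have : `|g x| <= `|g m| by apply: Hm; rewrite in_itv /=.
  rewrite /M; lra.
pose u := fun n x => P n (g1 x).
have Au : forall n, A (u n).
  elim=> [|n IH]; first exact: A0.
  have -> : u n.+1 = (fun x => u n x + (fun x => 2^-1 * (g1 x * g1 x) + (-2^-1) * (u n x * u n x)) x).
    by apply: funext => x; rewrite /u /=; ring.
  apply: (Aadd) => //; apply: (Aadd); apply: (Ascal); exact: (Amul).
have Aa : A (fun x => `|g1 x|).
  apply: (Acl u); [exact: Au | exact: C01_abs (Acont _ Ag1) |].
  move=> e e0.
  exists (Num.Def.trunc (2 / e)).+1 => n Nn x Ix.
  have [h1 h2] := P_err n (g11 x Ix).
  rewrite /u distrC ger0_norm //.
  have hN := truncnS_gt (2 / e).
  have : (Num.Def.trunc (2 / e)).+1%:R <= n%:R :> R by rewrite ler_nat.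
  move=> hn.
  have n2 : 2 / e < n%:R := lt_le_trans hN hn.
  have ne : 2 < e * n%:R by rewrite mulrC -ltr_pdivrMr.
  have np : 0 < n%:R :> R by apply: le_lt_trans n2; rewrite divr_ge0 // ltW.
  move: (`|g1 x| - P n (g1 x)) h1 h2 => E h1 h2.
  nra.
have -> : (fun x => `|g x|) = (fun x => M * `|g1 x|).
  apply: funext => x; rewrite /g1 normrM gtr0_norm ?invr_gt0 // mulrA mulrV ?mul1r //.
  by rewrite unitfE gt_eqF.
exact: Ascal.
Qed.


Lemma near_C01 (g : R -> R) (x0 : R) : C01 g -> 0 < x0 < 1 ->
  forall e, 0 < e -> \forall x \near x0, `|g x - g x0| < e.
Proof.
move=> cg hx0 e e0.
have int : (I01 (R:=R))° x0.
  have : x0 \in `]0, 1[ by rewrite in_itv /=.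
  move=> /near_in_itvoo; apply: filterS => y; rewrite in_itv /= => /andP[? ?].
  by rewrite /I01 /=; apply/andP; split; apply: ltW.
have cx := cg x0.
rewrite /continuous_at -(nbhs_subspace_interior int) in cx.
have H := @cvgr_distC_lt _ _ _ _ _ _ _ cx e e0. exact: H.
Qed.

Lemma finish A (Q : R -> R) (x0 z : R) : is_subalgebra A -> unif_closed A ->
  A Q -> 0 < x0 < 1 -> I01 z -> 0 < Q z -> (\forall x \near x0, Q x <= 0) ->
  exists f, [/\ A f, nonconst01 f & derivable f x0 1].
Proof.
move=> sA cA AQ hx0 Iz Qz nQ.
have [_ _ Aadd _ _] := sA.
exists (fun x => Q x + `|Q x|); split.
- exact: (Aadd _ _ AQ (abs_closed sA cA AQ)).
- exists x0, z; split => //.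
  + by case/andP: hx0 => a b; rewrite /I01 /=; apply/andP; split; apply: ltW.
  + have -> : Q x0 + `|Q x0| = 0 by rewrite ler0_norm ?subrr // (nbhs_singleton nQ).
    rewrite gtr0_norm // => /eqP; rewrite eq_sym paddr_eq0 ?ltW // => /andP[/eqP h _].
    by move: Qz; rewrite h ltxx.
- apply: (@near_eq_derivable _ _ _ (cst 0)); last exact: derivable_cst.
  by near=> x; rewrite ler0_norm ?subrr //; near: x.
Unshelve. all: by end_near.
Qed.


Lemma get_d (f : R -> R) (x0 x y : R) : C01 f -> I01 x0 -> I01 x -> I01 y ->
  f x <> f y -> exists z, [/\ I01 z, f z <> 0 & f z <> f x0].
Proof.
move=> cf I0 Ix Iy fxy.
have [c0|c0] := eqVneq (f x0) 0.
  have [fx0|fx0] := eqVneq (f x) 0.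
    by exists y; rewrite c0 -fx0; split => // /esym.
  by exists x; rewrite c0; split => //; apply/eqP.
have [w [Iw fw]] : exists w, I01 w /\ f w <> f x0.
  have [fx|fx] := eqVneq (f x) (f x0).
    by exists y; rewrite -fx; split => // /esym.
  by exists x; split => //; apply/eqP.
have [fw0|fw0] := eqVneq (f w) 0; last by exists w; split => //; apply/eqP.
have key : forall a b, I01 a -> I01 b -> a <= b -> ((f a = f x0 /\ f b = 0) \/ (f a = 0 /\ f b = f x0)) ->
    exists z, [/\ I01 z, f z <> 0 & f z <> f x0].
  move=> a b Ia Ib ab hab.
  have cab : {within `[a, b], continuous f}.
    apply: continuous_subspaceW cf => t /=; rewrite in_itv /= => /andP[hat htb].
    move: Ia Ib; rewrite /I01 /= => /andP[a0 a1] /andP[b0 b1].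
    by apply/andP; split; [apply: le_trans hat | apply: le_trans htb _].
  have hv : Num.min (f a) (f b) <= f x0 / 2 <= Num.max (f a) (f b).
    { apply/andP; split; [rewrite ge_min | rewrite le_max]; apply/orP.
      all: move: c0; rewrite neq_lt => /orP[] cs.
      all: case: hab => -[ha hb]; rewrite ?ha ?hb; try (left; lra); try (right; lra). }
  have [z zab fz] := IVT ab cab hv.
  exists z; split.
  - move: zab Ia Ib; rewrite in_itv /I01 /= => /andP[az zb] /andP[a0 a1] /andP[b0 b1].
    by apply/andP; split; [apply: le_trans az | apply: le_trans zb _].
  - by rewrite fz => h; move/eqP: c0; apply; lra.
  - by rewrite fz => h; move/eqP: c0; apply; lra.
have [xw|wx] := leP x0 w.
  by apply: (key x0 w) => //; left.
by apply: (key w x0) => //; [apply: ltW | right].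
Qed.

End Main.

Unset Implicit Arguments. Set Strict Implicit.

Theorem mainTheorem5 (R : realType) (A : set (R -> R)) (x0 : R) :
  is_subalgebra A -> unif_closed A ->
  (exists f, A f /\ nonconst01 f) ->
  0 < x0 < 1 ->
  exists f, [/\ A f, nonconst01 f & derivable f x0 1].
Proof.
move=> sA cA [f [Af [x [y [Ix Iy fxy]]]]] hx0.
have sA' := sA; case: sA' => Acont A0 Aadd Ascal Amul.
have I0 : I01 x0.
  by case/andP: hx0 => a b; rewrite /I01 /=; apply/andP; split; apply: ltW.
have [z [Iz fz0 fzc]] := get_d (Acont _ Af) I0 Ix Iy fxy.
have sqn : forall t : R, t * t = `|t| * `|t|.
  by move=> t; rewrite -normrM ger0_norm // -expr2 sqr_ge0.
have [c0|c0] := eqVneq (f x0) 0.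
  have ap : 0 < `|f z| by rewrite normr_gt0; apply/eqP.
  pose k := 2 / `|f z|.
  pose Q := fun x => k * (f x * f x) + (-1) * `|f x|.
  have AQ : A Q := Aadd _ _ (Ascal k _ (Amul _ _ Af Af)) (Ascal (-1) _ (abs_closed sA cA Af)).
  apply: (finish sA cA AQ hx0 Iz).
    rewrite /Q /k sqn.
    move: (`|f z|) ap => a ap.
    have -> : 2 / a * (a * a) = 2 * a by field; exact: lt0r_neq0.
    lra.
  have a2 : 0 < `|f z| / 2 by apply: divr_gt0.
  have := near_C01 (Acont _ Af) hx0 a2.
  apply: filterS => t; rewrite c0 subr0 => ht.
  rewrite /Q /k sqn.
  have kb : 2 / `|f z| * `|f t| <= 1.
    by rewrite mulrAC ler_pdivrMr // mul1r; lra.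
  have b0 : 0 <= `|f t| by [].
  move: (2 / `|f z|) (`|f t|) kb b0 => kk b kb b0.
  nra.
have d0 : f z != 0 by apply/eqP.
have dc : f z - f x0 != 0 by rewrite subr_eq0; apply/eqP.
pose be := (f x0 + f z) / (f x0 * f z * (f z - f x0)).
pose al := (-1 - be * (f x0 * f x0)) / f x0.
pose Q := fun x => al * f x + be * (f x * f x).
have AQ : A Q := Aadd _ _ (Ascal al _ Af) (Ascal be _ (Amul _ _ Af Af)).
have Q0 : Q x0 = -1 by rewrite /Q /al; field.
have Qz : Q z = 1 by rewrite /Q /al /be; field; rewrite ?c0 ?d0 ?dc.
apply: (finish sA cA AQ hx0 Iz); first by rewrite Qz.
have := near_C01 (Acont _ AQ) hx0 (@ltr01 R).
apply: filterS => t; rewrite Q0 => ht.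
have := ler_norm (Q t - -1); lra.
Qed.
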